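(* Let $S$ be a ground set, let $f$ be a function from subsets of $S$ to subsets of $S$, let $t\ge 1$ be an integer and $u=\lfloor(\frac{t}{2}+1)^2\rfloor$. A set $\mathcal{C}\subseteq S$ is a $t$-parent-identifying scheme under the $f$-channel if and only if there is no minimal forbidden configuration in $\mathcal{C}$ of size at most $u$.
   Context: Here $S$ is $Q^n$ or $2^Q$ for a finite set $Q$. $\mathcal{C}\subseteq S$ is a $t$-parent-identifying scheme under the $f$-channel if for every $\mathcal{C}'\subseteq\mathcal{C}$ with $|\mathcal{C}'|\le t$ and every $d\in f(\mathcal{C}')$, we have $\bigcap_{\mathcal{P}\subseteq\mathcal{C}:\,|\mathcal{P}|\le t,\ d\in f(\mathcal{P})}\mathcal{P}\neq\emptyset$. A configuration in $\mathcal{C}$ is a collection $\mathcal{F}=\{\mathcal{F}_1,\dots,\mathcal{F}_m\}$ of subsets $\mathcal{F}_i\subseteq\mathcal{C}$ with $|\mathcal{F}_i|\le t$ such that $\bigcap_{1\le i\le m}\mathcal{F}_i=\emptyset$; it is minimal if $\bigcap_{j\neq i}\mathcal{F}_j\neq\emptyset$ for every $1\le i\le m$. Its size is $|U(\mathcal{F})|$ where $U(\mathcal{F})=\bigcup_{i}\mathcal{F}_i$. A (minimal) forbidden configuration is a (minimal) configuration with $f(\mathcal{F}_1)\cap\cdots\cap f(\mathcal{F}_m)\neq\emptyset$. *)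

(* Defs.v *)
From mathcomp Require Import all_boot.
Set Implicit Arguments. Unset Strict Implicit. Unset Printing Implicit Defensive.

Section IPP.
Variables (S : finType) (f : {set S} -> {set S}) (t : nat).

Definition t_IPP (C : {set S}) : Prop :=
  forall (C' : {set S}), C' \subset C -> #|C'| <= t ->
  forall d, d \in f C' ->
    \bigcap_(P : {set S} | [&& P \subset C, #|P| <= t & d \in f P]) P != set0.

Definition configuration (C : {set S}) (m : nat) (F : 'I_m -> {set S}) : Prop :=
  (forall i, F i \subset C) /\ (forall i, #|F i| <= t) /\
  \bigcap_(i < m) F i = set0.

Definition minimal_configuration (C : {set S}) (m : nat) (F : 'I_m -> {set S}) : Prop :=
  configuration C F /\ forall i : 'I_m, \bigcap_(j < m | j != i) F j != set0.

Definition forbidden (m : nat) (F : 'I_m -> {set S}) : Prop :=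
  \bigcap_(i < m) f (F i) != set0.

Definition config_size (m : nat) (F : 'I_m -> {set S}) : nat :=
  #|\bigcup_(i < m) F i|.

End IPP.

(* Main.v *)
Require Import Defs.
From mathcomp Require Import all_boot.
From mathcomp Require Import zify.
From mathcomp Require Import all_boot.

Lemma arith_bound k t : k * (t + 2 - k) <= (t + 2) ^ 2 %/ 4.
Proof.
rewrite leq_divRL //.
case: (leqP k (t + 2)) => h.
  have e : t + 2 = k + (t + 2 - k) by rewrite subnKC.
  rewrite [in X in _ <= X]e.
  by rewrite mulnC; apply: (nat_AGM2 k (t + 2 - k)).
have -> : t + 2 - k = 0 by apply/eqP; rewrite subn_eq0 ltnW.
by rewrite muln0.
Qed.

Theorem proposition1 (S : finType) (f : {set S} -> {set S}) (t : nat)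
  (ht : 1 <= t) (C : {set S}) :
  let u := (t + 2) ^ 2 %/ 4 in
  t_IPP f t C <->
  ~ (exists (m : nat) (F : 'I_m -> {set S}),
        minimal_configuration t C F /\ forbidden f F /\ config_size F <= u).
Proof.
move=> u; split.
  move=> IPP [m [F [[[FC [Ft F0]] _] [Hf _]]]].
  case/set0Pn: Hf => d /bigcapP Hd.
  case: m F FC Ft F0 Hd => [|m] F FC Ft F0 Hd.
    by move: F0; rewrite big_ord0 => /setP /(_ d); rewrite !inE.
  have := IPP (F ord0) (FC ord0) (Ft ord0) d (Hd ord0 isT).
  case/set0Pn => x /bigcapP Hx.
  have : x \in \bigcap_(i < m.+1) F i.
    apply/bigcapP => i _; apply: Hx; rewrite FC Ft /=; exact: Hd.
  by rewrite F0 inE.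
move=> NE C' sC' cC' d dC'; apply/negP => /eqP H0; apply: NE.
set Fam := [set P : {set S} | [&& P \subset C, #|P| <= t & d \in f P]].
have H1 : \bigcap_(P in Fam) P = set0.
  by rewrite -H0; apply: eq_bigl => P; rewrite inE.
pose pG := fun G : {set {set S}} => (G \subset Fam) && (\bigcap_(X in G) X == set0).
have [G /minsetP [/andP [GF /eqP G0] minG]] : {G | minset pG G}.
  by apply: ex_minset; exists Fam; rewrite /pG subxx H1 eqxx.
have GF' : forall X, X \in G -> [&& X \subset C, #|X| <= t & d \in f X].
  by move=> X /(subsetP GF); rewrite inE.
have Gsub : forall X, X \in G -> \bigcap_(Y in G :\ X) Y != set0.
  move=> X XG; apply/negP => /eqP E.
  have := minG (G :\ X); rewrite /pG E eqxx (subset_trans (subD1set G X) GF).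
  move=> /(_ isT (subD1set G X)) /setP /(_ X).
  by rewrite !inE eqxx XG.
pose w := fun X => odflt d [pick y in \bigcap_(Y in G :\ X) Y].
have wE : forall X, X \in G -> w X \in \bigcap_(Y in G :\ X) Y.
  move=> X XG; rewrite /w; case: pickP => [y //|H].
  by exfalso; move: (Gsub X XG) => /set0Pn [y]; by move/negbT: (H y) => /negP.
have wIn : forall X Y, X \in G -> Y \in G -> X != Y -> w X \in Y.
  move=> X Y XG YG nXY; move/bigcapP: (wE X XG); apply.
  by rewrite !inE eq_sym nXY.
have wNot : forall X, X \in G -> w X \notin X.
  move=> X XG; apply/negP => wX.
  have : w X \in \bigcap_(Y in G) Y.
    apply/bigcapP => Y YG; case: (eqVneq X Y) => [<-//|nXY].
    exact: wIn.
  by rewrite G0 inE.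
have winj : {in G &, injective w}.
  move=> X Y XG YG e; apply/eqP; apply/negPn/negP => nXY.
  by move: (wIn X Y XG YG nXY); rewrite e (negbTE (wNot Y YG)).
set W := w @: G.
have cW : #|W| = #|G| by rewrite card_in_imset.
set k := #|G|.
have dS : d \in [set: S] by rewrite inE.
have kpos : 0 < k.
  rewrite lt0n; apply/negP => /eqP /cards0_eq G0'.
  by move: G0; rewrite G0' big_set0 => /setP /(_ d); rewrite !inE.
have Xcap : forall X, X \in G -> k.-1 <= #|X :&: W|.
  move=> X XG.
  have -> : k.-1 = #|W :\ w X|.
    by rewrite /k -cW (cardsD1 (w X) W) imset_f.
  apply: subset_leq_card; apply/subsetP => y; rewrite !inE => /andP [ny /imsetP [Y YG ey]]; subst y.
  rewrite imset_f // andbT; apply: wIn => //; apply/negP => /eqP E; by rewrite E eqxx in ny.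
have Xdiff : forall X, X \in G -> #|X :\: W| <= t - k.-1.
  move=> X XG; rewrite cardsD.
  have := Xcap X XG; case/and3P: (GF' X XG) => _ Xt _.
  move=> h; apply: leq_sub => //.
have kt : k.-1 <= t.
  case/card_gt0P: kpos => X XG; apply: (leq_trans (Xcap X XG)).
  case/and3P: (GF' X XG) => _ Xt _; apply: leq_trans Xt.
  by apply: subset_leq_card; apply: subsetIl.
pose F := fun i : 'I_k => (enum_val i : {set S}).
have FG : forall i, F i \in G by move=> i; apply: enum_valP.
have allF : forall X, X \in G -> exists i, F i = X.
  by move=> X XG; exists (enum_rank_in XG X); rewrite /F enum_rankK_in.
exists k, F; split; [split; [split; [|split]|] | split].
- by move=> i; case/and3P: (GF' _ (FG i)).
- by move=> i; case/and3P: (GF' _ (FG i)).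
- apply/setP => x; rewrite inE; apply/negP => /bigcapP Hx.
  have : x \in \bigcap_(X in G) X.
    apply/bigcapP => X XG; case: (allF X XG) => i <-; exact: Hx.
  by rewrite G0 inE.
- move=> i; apply/set0Pn; exists (w (F i)); apply/bigcapP => j nji.
  apply: wIn; rewrite ?FG //.
  by apply: contra nji => /eqP /enum_val_inj ->.
- apply/set0Pn; exists d; apply/bigcapP => i _.
  by case/and3P: (GF' _ (FG i)).
rewrite /config_size.
pose P' := [set X :\: W | X in G].
have sub : \bigcup_(i < k) F i \subset W :|: cover P'.
  apply/subsetP => x /bigcupP [i _ xF].
  rewrite inE; case xW: (x \in W) => //=.
  apply/bigcupP; exists (F i :\: W); first by apply: imset_f; exact: FG.
  by rewrite inE xW.
apply: (leq_trans (subset_leq_card sub)).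
apply: (leq_trans (leq_card_setU _ _)).
rewrite cW.
have hc : #|cover P'| <= k * (t - k.-1).
  apply: (leq_trans (leq_card_cover P')).
  apply: (@leq_trans (\sum_(A in P') (t - k.-1))).
    apply: leq_sum => A /imsetP [X XG ->]; exact: Xdiff.
  rewrite sum_nat_const; apply: leq_mul => //; exact: leq_imset_card.
apply: (leq_trans (leq_add (leqnn k) hc)).
apply: leq_trans (arith_bound k t).
have -> : t + 2 - k = (t - k.-1).+1.
  rewrite -(prednK kpos) in kt *; set j := k.-1 in kt *; lia.
by rewrite mulnS.
Qed.
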